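(* Let $\tau_1(x)=\frac{x+1}{x+3}$ and $\tau_2(x)=\frac{2}{4-x}$ on $[0,1]$. For $t>0$ let $A_1(y)=\frac12\left(\log\frac{2}{(y-1)^2}+\log 2\right)$ (used on $\tau_1([0,1])=[1/3,1/2]$) and $A_2(y,t)=\frac12\left(\log\frac{2}{y^2}+\log(2t^2)\right)$ (used on $\tau_2([0,1])=[1/2,2/3]$). Let $V_1(x,t)=\log\left(t\left(2+\sqrt2-\frac{x}{\sqrt2}\right)\right)$, $V_2(x,t)=\log(x+1+\sqrt2)$ and $V(x,t)=\max\{V_1(x,t),V_2(x,t)\}$. If $0<t\le t_1:=\frac{4(4+3\sqrt2)}{18+13\sqrt2}$, then for every $x\in[1/3,2/3]$, $$V(x,t)+\log(2+\sqrt2)=\max\{A_1(\tau_1(x))+V(\tau_1(x),t),\,A_2(\tau_2(x),t)+V(\tau_2(x),t)\},$$ so $V(\cdot,t)$ is a calibrated subaction with maximal value $m(A,t)=\log(2+\sqrt2)$.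
   Context: This potential is associated with the pair of matrices $\begin{pmatrix}2&1\\2&2\end{pmatrix}$ and $t\begin{pmatrix}2&2\\1&2\end{pmatrix}$, whose projective actions on $[0,1]$ are $\tau_1,\tau_2$. *)

(* Defs.v *)
From Stdlib Require Import Reals.
Open Scope R_scope.

Definition tau1 (x : R) : R := (x + 1) / (x + 3).
Definition tau2 (x : R) : R := 2 / (4 - x).

Definition Apot1 (y : R) : R := / 2 * (ln (2 / (y - 1) ^ 2) + ln 2).
Definition Apot2 (y t : R) : R := / 2 * (ln (2 / y ^ 2) + ln (2 * t ^ 2)).

Definition V1 (x t : R) : R := ln (t * (2 + sqrt 2 - x / sqrt 2)).
Definition V2 (x t : R) : R := ln (x + 1 + sqrt 2).
Definition V (x t : R) : R := Rmax (V1 x t) (V2 x t).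

Definition t1 : R := 4 * (4 + 3 * sqrt 2) / (18 + 13 * sqrt 2).

(* Main.v *)
Require Import Defs.
From Stdlib Require Import Reals Lra Psatz.
Open Scope R_scope.

Lemma Rmax_ln a b : 0 < a -> 0 < b -> Rmax (ln a) (ln b) = ln (Rmax a b).
Proof.
  intros Ha Hb. unfold Rmax.
  destruct (Rle_dec (ln a) (ln b)) as [H|H]; destruct (Rle_dec a b) as [H'|H']; auto.
  - exfalso. assert (ln b < ln a) by (apply ln_increasing; lra). lra.
  - exfalso. destruct H' as [H'|H'].
    + assert (ln a < ln b) by (apply ln_increasing; lra). lra.
    + subst; lra.
Qed.

Lemma Rmax_pos a b : 0 < a -> 0 < Rmax a b.
Proof. intros; unfold Rmax; destruct Rle_dec; lra. Qed.

Lemma Rmax4 a b c d : a <= Rmax c d -> b <= Rmax c d ->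
  Rmax (Rmax a c) (Rmax b d) = Rmax d c.
Proof. intros. unfold Rmax in *; repeat destruct Rle_dec; lra. Qed.

Theorem mainTheorem4 (t : R) (ht0 : 0 < t) (ht1 : t <= t1) :
  forall x : R, 1 / 3 <= x <= 2 / 3 ->
    V x t + ln (2 + sqrt 2) =
    Rmax (Apot1 (tau1 x) + V (tau1 x) t) (Apot2 (tau2 x) t + V (tau2 x) t).
Proof.
  intros x Hx.
  set (s := sqrt 2).
  assert (Hs2 : s * s = 2) by (unfold s; apply sqrt_sqrt; lra).
  assert (Hs0 : 0 < s) by (unfold s; apply sqrt_lt_R0; lra).
  assert (Hsb : 1.41 < s < 1.42) by (split; nra).
  assert (Ht : t * (18 + 13 * s) <= 4 * (4 + 3 * s)).
  { unfold t1 in ht1. fold s in ht1.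
    apply (Rmult_le_compat_r (18 + 13 * s)) in ht1; [|lra].
    replace (4 * (4 + 3 * s) / (18 + 13 * s) * (18 + 13 * s)) with (4 * (4 + 3 * s)) in ht1
      by (field; lra). lra. }
  assert (Hapot1 : Apot1 (tau1 x) = ln (x + 3)).
  { unfold Apot1, tau1.
    replace (2 / ((x + 1) / (x + 3) - 1) ^ 2) with ((x + 3) * (x + 3) / 2)
      by (field; lra).
    rewrite <- ln_mult by nra.
    replace ((x + 3) * (x + 3) / 2 * 2) with ((x + 3) * (x + 3)) by field.
    rewrite ln_mult by lra. field. }
  assert (Hapot2 : Apot2 (tau2 x) t = ln (t * (4 - x))).
  { unfold Apot2, tau2.
    replace (2 / (2 / (4 - x)) ^ 2) with ((4 - x) * (4 - x) / 2)
      by (field; lra).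
    rewrite <- ln_mult by nra.
    replace ((4 - x) * (4 - x) / 2 * (2 * t ^ 2)) with ((t * (4 - x)) * (t * (4 - x))) by field.
    rewrite ln_mult by nra. field. }
  rewrite Hapot1, Hapot2.
  unfold V, V1, V2. fold s.
  set (y1 := tau1 x). set (y2 := tau2 x).
  assert (Hy1 : 0 < y1 < 1) by (unfold y1, tau1; split;
    [apply Rdiv_lt_0_compat; lra | apply (Rmult_lt_reg_r (x+3)); [lra|]; field_simplify; lra]).
  assert (Hy2 : 0 < y2 < 1) by (unfold y2, tau2; split;
    [apply Rdiv_lt_0_compat; lra | apply (Rmult_lt_reg_r (4-x)); [lra|]; field_simplify; lra]).
  assert (Hpos : forall z, 0 <= z <= 1 -> 0 < 2 + s - z / s).
  { intros z Hz. assert (z / s <= 1 / s) by (apply Rmult_le_compat_r; [left; apply Rinv_0_lt_compat; lra| lra]).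
    assert (1 / s < 1) by (apply (Rmult_lt_reg_r s); [lra|]; field_simplify; lra). lra. }
  assert (P0 := Hpos x ltac:(lra)).
  assert (P1 := Hpos y1 ltac:(lra)).
  assert (P2 := Hpos y2 ltac:(lra)).
  rewrite !Rmax_ln by nra.
  rewrite <- !ln_mult by (try apply Rmax_pos; nra).
  rewrite Rmax_ln by (apply Rmult_lt_0_compat; try apply Rmax_pos; nra).
  f_equal.
  rewrite Rmult_comm, <- !RmaxRmult by nra.
  assert (Hinv : / s = s * / 2) by (field_simplify; [|lra]; rewrite <- Hs2 at 1; field; lra).
  assert (Q2 : s ^ 2 = 2) by (simpl; lra).
  assert (Q3 : s ^ 3 = 2 * s) by (simpl; nra).
  assert (Q4 : s ^ 4 = 4) by (simpl; nra).
  assert (E1 : (2 + s) * (t * (2 + s - x / s)) = t * (6 + 4 * s - (1 + s) * x)).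
  { unfold Rdiv; rewrite Hinv. ring_simplify. rewrite ?Q2, ?Q3, ?Q4; field. }
  assert (E2 : (2 + s) * (x + 1 + s) = (2 + s) * x + 4 + 3 * s) by (ring_simplify; rewrite ?Q2, ?Q3, ?Q4; field).
  assert (E3 : (x + 3) * (t * (2 + s - y1 / s)) = t * ((2 + s / 2) * x + 6 + 5 * s / 2)).
  { unfold Rdiv; rewrite Hinv. unfold y1, tau1. field_simplify; [|lra]. ring_simplify; rewrite ?Q2, ?Q3, ?Q4; field. }
  assert (E4 : (x + 3) * (y1 + 1 + s) = (2 + s) * x + 4 + 3 * s).
  { unfold y1, tau1. field; lra. }
  assert (E5 : t * (4 - x) * (t * (2 + s - y2 / s)) = t * t * (8 + 3 * s - (2 + s) * x)).
  { unfold Rdiv; rewrite Hinv. unfold y2, tau2. field_simplify; [|lra]. ring_simplify; rewrite ?Q2, ?Q3, ?Q4; field. }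
  assert (E6 : t * (4 - x) * (y2 + 1 + s) = t * (6 + 4 * s - (1 + s) * x)).
  { unfold y2, tau2. field_simplify; [|lra]. ring_simplify; rewrite ?Q2, ?Q3, ?Q4; field. }
  rewrite E1, E2, E3, E4, E5, E6.
  symmetry; apply Rmax4.
  - destruct (Rle_dec x (s - 1)) as [Hx1|Hx1].
    + eapply Rle_trans; [|apply Rmax_r]. apply Rmult_le_compat_l; [lra|]. nra.
    + eapply Rle_trans; [|apply Rmax_l].
      assert (HA : 0 < (2 + s / 2) * x + 6 + 5 * s / 2) by nra.
      assert (K : 4 * (4 + 3 * s) * ((2 + s / 2) * x + 6 + 5 * s / 2)
                  <= ((2 + s) * x + 4 + 3 * s) * (18 + 13 * s)) by nra.
      assert (K2 : t * (18 + 13 * s) * ((2 + s / 2) * x + 6 + 5 * s / 2)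
                  <= 4 * (4 + 3 * s) * ((2 + s / 2) * x + 6 + 5 * s / 2))
        by (apply Rmult_le_compat_r; lra).
      apply (Rmult_le_reg_r (18 + 13 * s)); [lra|]. nra.
  - eapply Rle_trans; [|apply Rmax_r].
    assert (Ht' : t <= 0.91) by nra.
    assert (K : t * (8 + 3 * s - (2 + s) * x) <= 6 + 4 * s - (1 + s) * x) by nra.
    replace (t * t * (8 + 3 * s - (2 + s) * x)) with (t * (t * (8 + 3 * s - (2 + s) * x))) by ring.
    apply Rmult_le_compat_l; lra.
Qed.
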